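(* For every real $p>1$ and all integers $s\ge2$ and $n\ge s$, $$\sum_{\mathbf a\in\mathcal{F}_s(n)}\Big(\frac{n}{\prod_{j=1}^sa_j}\Big)^p<C_p^{s-1},$$ where $\mathcal{F}_s(n)=\{\mathbf a\in\{1,\dots,n\}^s:\sum_{j=1}^sa_j=n\}$ and $C_p=2^p\zeta(p)$ with $\zeta(p)=\sum_{a=1}^\infty a^{-p}$. *)

(* Defs.v *)
From HB Require Import structures.
From mathcomp Require Import all_boot all_order all_algebra.
From mathcomp Require Import all_classical all_reals all_analysis.
Set Implicit Arguments. Unset Strict Implicit. Unset Printing Implicit Defensive.
Import Order.TTheory GRing.Theory Num.Theory.
Import numFieldNormedType.Exports.
Local Open Scope ring_scope.

Definition zeta (R : realType) (p : R) : R :=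
  limn (series (fun a : nat => (a.+1%:R : R) `^ (- p))).

Definition Cp (R : realType) (p : R) : R := (2 : R) `^ p * zeta p.

(* Sum over compositions F_s(n) = {a in {1..n}^s : sum a_j = n} of
   (n / prod a_j)^p.  An element a : {ffun 'I_s -> 'I_n} encodes
   a_j = (a j).+1 in {1,...,n}. *)
Definition compSum (R : realType) (p : R) (s n : nat) : R :=
  \sum_(a : {ffun 'I_s -> 'I_n} | (\sum_(j < s) (a j).+1 == n)%N)
     ((n%:R : R) / (\prod_(j < s) ((a j).+1%:R : R))) `^ p.

(* Main.v *)
Require Import Defs.
From HB Require Import structures.
From mathcomp Require Import all_boot all_order all_algebra.
From mathcomp Require Import all_classical all_reals all_analysis.
From mathcomp Require Import ring lra zify.
Import Order.TTheory GRing.Theory Num.Theory.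
Import numFieldNormedType.Exports.
Set Implicit Arguments. Unset Strict Implicit.
Local Open Scope ring_scope.

Section Zeta.
Context (R : realType) (p : R) (p1 : 1 < p).

Definition uu (k : nat) : R := (k.+1%:R : R) `^ (- p).

Lemma uu_gt0 k : 0 < uu k.
Proof. by rewrite /uu powR_gt0 // ltr0n. Qed.

Lemma powN_anti (a b : R) : 0 < a -> a <= b -> b `^ (-p) <= a `^ (-p).
Proof.
move=> a0 ab; have b0 : 0 < b by apply: lt_le_trans ab.
rewrite !powRN lef_pV2 ?posrE ?powR_gt0 //.
by apply: ge0_ler_powR => //; rewrite ?nnegrE ltW // (lt_trans ltr01).
Qed.

Definition rr : R := 2 `^ (1 - p).

Lemma rr_lt1 : rr < 1.
Proof.
rewrite /rr -opprB powRN invf_lt1 ?powR_gt0 //.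
have := @gt0_ltr_powR R (p - 1) _ 1 2.
by rewrite powR1; apply; rewrite ?nnegrE ?subr_gt0 ?ltr1n.
Qed.

Lemma rr_ge0 : 0 <= rr. Proof. exact: powR_ge0. Qed.

Lemma pow2J (J : nat) : ((2 ^ J)%N%:R : R) `^ (1 - p) = rr ^+ J.
Proof.
by rewrite natrX -powR_mulrn // -powRrM mulrC powRrM powR_mulrn // powR_ge0.
Qed.

Lemma block (J : nat) :
  \sum_(2 ^ J - 1 <= k < 2 ^ J.+1 - 1) uu k <= rr ^+ J.
Proof.
have hJ : (0 < 2 ^ J)%N by rewrite expn_gt0.
apply: (@le_trans _ _ (\sum_(2 ^ J - 1 <= k < 2 ^ J.+1 - 1) ((2 ^ J)%N%:R : R) `^ (-p))).
  rewrite big_nat [X in _ <= X]big_nat; apply: ler_sum => k /andP[k1 k2].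
  apply: powN_anti; first by rewrite ltr0n.
  by rewrite ler_nat; lia.
rewrite sumr_const_nat -pow2J.
have -> : (2 ^ J.+1 - 1 - (2 ^ J - 1) = 2 ^ J)%N by rewrite expnS; lia.
rewrite powRD; last by rewrite pnatr_eq0 expn_eq0 implybT.
by rewrite powRr1 // mulr_natl.
Qed.

Definition BB : R := (1 - rr)^-1.

Lemma condense (J : nat) : series uu (2 ^ J - 1)%N <= BB * (1 - rr ^+ J).
Proof.
elim: J => [|J IH].
  by rewrite expn0 subnn seriesEnat /= big_geq // expr0 subrr mulr0.
rewrite seriesEnat /= (@big_cat_nat _ _ _ (2 ^ J - 1)%N) //=; last first.
  by rewrite expnS; lia.
apply: (@le_trans _ _ (BB * (1 - rr ^+ J) + rr ^+ J)).
  apply: lerD; last exact: block.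
  by move: IH; rewrite seriesEnat.
have h : 1 - rr != 0 by rewrite subr_eq0 eq_sym (lt_eqF rr_lt1).
rewrite le_eqVlt; apply/orP; left; apply/eqP.
rewrite /BB exprS; field; exact: h.
Qed.

Lemma BB_ge0 : 0 <= BB.
Proof. by rewrite /BB invr_ge0 subr_ge0 ltW // rr_lt1. Qed.

Lemma series_bound (N : nat) : series uu N <= BB.
Proof.
apply: (@le_trans _ _ (series uu (2 ^ N - 1)%N)).
  rewrite !seriesEnat /=; apply: nondecreasing_series.
    by move=> n _ _; exact: ltW (uu_gt0 n).
  have := @ltn_expl 2 N isT; lia.
apply: (le_trans (condense N)).
rewrite ler_piMr ?BB_ge0 // gerBl exprn_ge0 //; exact: rr_ge0.
Qed.

Lemma series_nd : {homo series uu : n m / (n <= m)%N >-> n <= m}.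
Proof.
move=> n m nm; rewrite !seriesEnat /=; apply: nondecreasing_series => //.
by move=> k _ _; exact: ltW (uu_gt0 k).
Qed.

Lemma series_cvg : cvgn (series uu).
Proof.
apply: nondecreasing_is_cvgn; first exact: series_nd.
by exists BB => _ [n _ <-]; exact: series_bound.
Qed.

Lemma series_lt_zeta (N : nat) : series uu N < zeta p.
Proof.
apply: (@lt_le_trans _ _ (series uu N.+1)).
  rewrite !seriesEnat /= big_nat_recr //= ltrDl; exact: uu_gt0.
exact: (nondecreasing_cvgn_le series_nd series_cvg).
Qed.

End Zeta.
Section TPart.
Context (R : realType) (p : R) (p1 : 1 < p).

Lemma half_conv (a b : R) : 0 <= a -> 0 <= b ->
  (2^-1 * a + 2^-1 * b) `^ p <= 2^-1 * a `^ p + 2^-1 * b `^ p.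
Proof.
move=> a0 b0.
have p1' : 1 <= p by exact: ltW.
rewrite {2 4}(_ : 2^-1 = 1 - 2^-1); last by rewrite {2}(splitr 1) div1r addrK.
by apply: (convex_powR p1' (Itv01 _ _)) => //=;
  rewrite ?inE/= ?in_itv/= ?andbT // ?invr_ge0// invf_le1 ?ler1n.
Qed.

Lemma conv2 (x y : R) : 0 <= x -> 0 <= y ->
  (x + y) `^ p <= 2 `^ (p - 1) * (x `^ p + y `^ p).
Proof.
move=> x0 y0.
have := @half_conv (2 * x) (2 * y) (mulr_ge0 (ler0n _ 2) x0) (mulr_ge0 (ler0n _ 2) y0).
rewrite !mulrA mulVf ?pnatr_eq0 // !mul1r => /le_trans; apply.
rewrite !powRM // !mulrA -mulrDr; apply: ler_wpM2r.

  by rewrite addr_ge0 // powR_ge0.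
rewrite powRD; last by rewrite pnatr_eq0 implybT.
by rewrite powR_inv1 // mulrC.
Qed.

Lemma invpow (k : R) : 0 < k -> (k^-1) `^ p = k `^ (- p).
Proof.
move=> k0; rewrite powRN.
apply: (@mulIf _ (k `^ p)); first by rewrite gt_eqF // powR_gt0.
rewrite mulVf ?gt_eqF ?powR_gt0 // -powRM ?invr_ge0 ?ltW //.
by rewrite mulVf ?gt_eqF // powR1.
Qed.

Definition TT (m : nat) : R :=
  \sum_(1 <= j < m) (j%:R^-1 + (m - j)%:R^-1) `^ p.

Lemma TT_le m : TT m <= 2 `^ p * series (uu p) m.-1.
Proof.
rewrite /TT.
apply: (@le_trans _ _ (\sum_(1 <= j < m)
   2 `^ (p - 1) * ((j%:R : R) `^ (- p) + ((m - j)%:R : R) `^ (-p)))).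
  rewrite big_nat [X in _ <= X]big_nat; apply: ler_sum => j /andP[j1 j2].
  rewrite -invpow ?ltr0n // -invpow ?ltr0n ?subn_gt0 //.
  by apply: conv2; rewrite invr_ge0 ler0n.
rewrite -mulr_sumr big_split /=.
have -> : \sum_(1 <= i < m) ((m - i)%:R : R) `^ (- p) =
          \sum_(1 <= i < m) (i%:R : R) `^ (- p).
  rewrite big_nat_rev /= big_nat [X in _ = X]big_nat.
  apply: eq_bigr => i /andP[i1 i2]; congr (_ `^ _); congr (_%:R); lia.
have -> : \sum_(1 <= i < m) (i%:R : R) `^ (- p) = series (uu p) m.-1.
  rewrite seriesEnat /= -(add0n 1%N) big_addn subn1.
  by apply: eq_bigr => i _; rewrite addn1.
rewrite le_eqVlt; apply/orP; left; apply/eqP.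
rewrite -mulr2n mulrnAr -mulr_natl mulrA; congr (_ * _).
by rewrite mulr_powRB1 // (lt_trans ltr01 p1).
Qed.

Lemma TT_lt m : TT m < Cp p.
Proof.
apply: (le_lt_trans (TT_le m)); rewrite /Cp ltr_pM2l ?powR_gt0 //.
exact: series_lt_zeta.
Qed.

End TPart.

Section Poly.
Context (R : realType) (p : R) (p1 : 1 < p) (n : nat).

Definition PP : {poly R} := \sum_(j < n) uu p j *: 'X^(j.+1).
Definition cc s m := (PP ^+ s)`_m.

Lemma PP_coef0 : PP`_0 = 0.
Proof. by rewrite coef_sum big1 // => j _; rewrite coefZ coefXn mulr0. Qed.

Lemma PP_coef i : (0 < i)%N -> (i <= n)%N -> PP`_i = (i%:R : R) `^ (- p).
Proof.
case: i => // i _ hi; rewrite coef_sum (bigD1 (Ordinal hi)) //= big1 ?addr0.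
  by rewrite coefZ coefXn eqxx mulr1.
move=> j hj; rewrite coefZ coefXn.
have -> : (i.+1 == j.+1) = false.
  by apply/negbTE; rewrite eqSS eq_sym; exact: hj.
by rewrite mulr0.
Qed.

Lemma cc0 s : (0 < s)%N -> cc s 0 = 0.
Proof. by case: s => // s _; rewrite /cc exprS coef0M PP_coef0 mul0r. Qed.

Lemma ccS s m : cc s.+1 m = \sum_(j < m.+1) PP`_j * cc s (m - j).
Proof. by rewrite /cc exprS coefM. Qed.

Lemma step s K : (0 < s)%N ->
  (forall m, (m <= n)%N -> (m%:R : R) `^ p * cc s m <= K) ->
  forall m, (m <= n)%N -> (m%:R : R) `^ p * cc s.+1 m <= K * TT p m.
Proof.
move=> s0 IH m mn.
rewrite ccS -(big_mkord xpredT (fun j => PP`_j * cc s (m - j))) mulr_sumr.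
case: m mn => [|m] mn.
  by rewrite big_nat1 PP_coef0 mul0r mulr0 /TT big_geq // mulr0.
rewrite big_nat_recr // big_ltn // PP_coef0 /=.
rewrite mul0r mulr0 add0r subnn (cc0 s0) mulr0 mulr0 addr0.
rewrite /TT mulr_sumr big_nat [X in _ <= X]big_nat.
apply: ler_sum => j /andP[j1 j2].
rewrite PP_coef //; last by lia.
set t := ((j%:R : R)^-1 + ((m.+1 - j)%:R)^-1).
have jp : (0 < (j%:R : R)) by rewrite ltr0n.
have mjp : (0 < ((m.+1 - j)%:R : R)) by rewrite ltr0n subn_gt0.
have ht : (m.+1%:R : R) = t * (m.+1 - j)%:R * j%:R.
  have e : (m.+1%:R : R) = (m.+1 - j)%:R + j%:R by rewrite -natrD subnK // ltnW.
  by rewrite /t e; field; rewrite !gt_eqF.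
have t0 : 0 <= t by rewrite addr_ge0 // invr_ge0 ltW.
rewrite ht !powRM ?mulr_ge0 ?ler0n //.
have -> : t `^ p * ((m.+1 - j)%:R : R) `^ p * (j%:R : R) `^ p *
   ((j%:R : R) `^ (- p) * cc s (m.+1 - j)) =
   t `^ p * (((m.+1 - j)%:R : R) `^ p * cc s (m.+1 - j)).
  rewrite -!mulrA; congr (_ * (_ * _)); rewrite mulrA -powRD.
    by rewrite subrr powRr0 mul1r.
  by rewrite subrr eqxx /= gt_eqF.
rewrite mulrC; apply: ler_wpM2r; first exact: powR_ge0.
by apply: IH; lia.
Qed.


Lemma bound s : forall m, (m <= n)%N -> (m%:R : R) `^ p * cc s.+1 m <= Cp p ^+ s.
Proof.
elim: s => [|s IH] m mn.
  rewrite /cc expr1 expr0.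
  case: m mn => [|m] mn; first by rewrite PP_coef0 mulr0.
  rewrite PP_coef // -powRD; last by rewrite subrr eqxx /= pnatr_eq0.
  by rewrite subrr powRr0.
apply: (le_trans (step (K := Cp p ^+ s) _ IH mn)) => //.
rewrite exprSr ler_wpM2l ?exprn_ge0 //; last exact: ltW (TT_lt p1 m).
by rewrite /Cp mulr_ge0 ?powR_ge0 // ltW // (le_lt_trans _ (series_lt_zeta p1 0)) // seriesEnat /= big_geq.
Qed.

End Poly.

Lemma prod_powR (R : realType) (I : Type) (r : seq I) (F : I -> R) (q : R) :
  (forall i, 0 <= F i) -> (\prod_(i <- r) F i) `^ q = \prod_(i <- r) F i `^ q.
Proof.
move=> F0; elim: r => [|a r IH]; first by rewrite !big_nil powR1.
by rewrite !big_cons powRM ?IH // prodr_ge0.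
Qed.

Lemma compSumE (R : realType) (p : R) (s n : nat) :
  compSum p s n = (n%:R : R) `^ p * cc p n s n.
Proof.
rewrite /cc.
have -> : PP p n ^+ s = \prod_(i < s) PP p n by rewrite -(big_mkord xpredT (fun=> PP p n)) prodr_const_nat subn0.
rewrite /PP bigA_distr_bigA coef_sum /compSum big_mkcond mulr_sumr.
apply: eq_bigr => f _.
have -> : \prod_(i < s) (uu p (f i) *: 'X^((f i).+1)) =
          (\prod_(i < s) uu p (f i)) *: 'X^(\sum_(i < s) (f i).+1).
  under eq_bigr do rewrite -mul_polyC.
  by rewrite big_split /= prodrXr -rmorph_prod mul_polyC.
rewrite coefZ coefXn eq_sym.
case: eqP => [Hs|_]; last by rewrite !mulr0.
rewrite mulr1 powRM ?invr_ge0 ?prodr_ge0 // ?invpow; last first.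
  by apply: prodr_gt0 => i _; rewrite ltr0n.
by rewrite prod_powR.
Qed.

Lemma Cp_gt0 (R : realType) (p : R) : 1 < p -> 0 < Cp p.
Proof.
move=> p1; rewrite /Cp mulr_gt0 ?powR_gt0 //.
by apply: le_lt_trans (series_lt_zeta p1 0); rewrite seriesEnat /= big_geq.
Qed.

Theorem lemmaS10 (R : realType) (p : R) (s n : nat) :
  1 < p -> (2 <= s)%N -> (s <= n)%N ->
  compSum p s n < Cp p ^+ s.-1.
Proof.
move=> p1 s2 sn; rewrite compSumE.
case: s s2 sn => [|[|s]] // _ sn.
have h := @step R p p1 n s.+1 (Cp p ^+ s) isT (@bound R p p1 n s) n (leqnn n).
apply: (le_lt_trans h); rewrite [s.+2.-1]/= exprSr ltr_pM2l ?TT_lt //.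
by rewrite exprn_gt0 // Cp_gt0.
Qed.
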